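(* Let $k:\mathbb{R}^d\to[0,\infty)$ be radial with $\int_{\mathbb{R}^d}k=1$, $|x|^2k\in L^1(\mathbb{R}^d)$ and $\nabla k\in L^1(\mathbb{R}^d)$, and let $\hat k(\xi)=\int_{\mathbb{R}^d}k(x)e^{-2\pi i x\cdot\xi}\mathrm{d} x$. Define $h:\mathbb{R}^d\to\mathbb{R}^d$ by $h(\xi)=\xi\sqrt{\frac{\hat k(0)-\hat k(\xi)}{|\xi|^2}}$ for $\xi\ne0$ and $h(0)=0$. Then $h$ is globally Lipschitz on $\mathbb{R}^d$.
   Context: Under these assumptions $\hat k$ is real and $\hat k(0)-\hat k(\xi)\ge0$ for all $\xi$, so $h$ is well defined. *)

(* Defs.v *)
From HB Require Import structures.
From mathcomp Require Import all_boot all_order all_algebra.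
From mathcomp Require Import all_classical all_reals all_analysis.
From mathcomp Require Import complex.

Set Implicit Arguments.
Unset Strict Implicit.
Unset Printing Implicit Defensive.

Import Order.TTheory GRing.Theory Num.Theory.
Import numFieldNormedType.Exports.

Local Open Scope classical_set_scope.
Local Open Scope ring_scope.

(* R^d is represented by row vectors 'rV[R]_d; coordinates x 0 i. *)
Section Defs.
Variable R : realType.

(* Euclidean inner product and Euclidean norm on R^d
   (the library norm on 'rV is the max-norm, so we define these explicitly). *)
Definition dotR (d : nat) (x y : 'rV[R]_d) : R := \sum_(i < d) x 0 i * y 0 i.
Definition enorm (d : nat) (x : 'rV[R]_d) : R := Num.sqrt (dotR x x).

(* Borel sigma-algebra on R^d : generated by the open sets of the
   (product = Euclidean) topology of 'rV[R]_d. *)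
Definition borel_rV (d : nat) : set (set 'rV[R]_d) := <<s open >>.

Definition borel_fun (d : nat) (f : 'rV[R]_d -> R) : Prop :=
  forall B : set R, measurable B -> borel_rV (f @^-1` B).

(* Lebesgue integral over R^d of a nonnegative (extended-real) function,
   as the iterated integral dx_1 dx_2 ... dx_d of one-dimensional Lebesgue
   integrals (equal to the d-dimensional Lebesgue integral for Borel
   measurable nonnegative functions, by Tonelli). *)
Fixpoint iint_nn (n : nat) : ('rV[R]_n -> \bar R) -> \bar R :=
  match n return ('rV[R]_n -> \bar R) -> \bar R with
  | 0 => fun f => f 0
  | n'.+1 => fun f =>
      (\int[@lebesgue_measure R]_(t in [set: R])
         iint_nn (fun y : 'rV[R]_n' => f (row_mx (const_mx t : 'rV[R]_1) y)))%E
  end.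

Definition iint (d : nat) (f : 'rV[R]_d -> R) : \bar R :=
  (iint_nn (fun x => (Num.max (f x) 0)%:E) - iint_nn (fun x => (Num.max (- f x) 0)%:E))%E.

Definition L1 (d : nat) (f : 'rV[R]_d -> R) : Prop :=
  borel_fun f /\ (iint_nn (fun x => `|f x|%:E) < +oo)%E.

Definition radial (d : nat) (k : 'rV[R]_d -> R) : Prop :=
  forall x y, enorm x = enorm y -> k x = k y.

Definition ebasis (d : nat) (j : 'I_d) : 'rV[R]_d := delta_mx 0 j.

Fixpoint iter_partial (d : nat) (s : seq 'I_d) (phi : 'rV[R]_d -> R)
  : 'rV[R]_d -> R :=
  match s with
  | [::] => phi
  | j :: s' => fun x => derive (iter_partial s' phi) x (ebasis j)
  end.

Definition test_fun (d : nat) (phi : 'rV[R]_d -> R) : Prop :=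
  (forall s : seq 'I_d, continuous (iter_partial s phi) /\
     forall (j : 'I_d) x, derivable (iter_partial s phi) x (ebasis j)) /\
  compact (closure [set x | phi x != 0]).

Definition weak_grad_L1 (d : nat) (k : 'rV[R]_d -> R) : Prop :=
  exists g : 'I_d -> 'rV[R]_d -> R,
    forall j : 'I_d, L1 (g j) /\
      forall phi, test_fun phi ->
        iint (fun x => k x * derive phi x (ebasis j))
        = (- iint (fun x => (g j x * phi x)%R))%E.

Definition fourier (d : nat) (k : 'rV[R]_d -> R) (xi : 'rV[R]_d) : R[i] :=
  (fine (iint (fun x => k x * cos (2 * pi * dotR x xi))) +i*
   fine (iint (fun x => - (k x * sin (2 * pi * dotR x xi)))))%C.

(* h(xi) = xi sqrt((khat 0 - khat xi)/|xi|^2), h(0) = 0;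
   khat is real under the hypotheses, we take the real part. *)
Definition hmap (d : nat) (k : 'rV[R]_d -> R) (xi : 'rV[R]_d) : 'rV[R]_d :=
  if xi == 0 then 0
  else Num.sqrt (complex.Re (fourier k 0 - fourier k xi) / enorm xi ^+ 2) *: xi.

End Defs.

(* Main.v *)
Require Import Defs.
From HB Require Import structures.
From mathcomp Require Import all_boot all_order all_algebra.
From mathcomp Require Import all_classical all_reals all_analysis.
From mathcomp Require Import complex.
From mathcomp Require Import lra ring.
From mathcomp Require Import measurable_realfun.
Import Order.TTheory GRing.Theory Num.Theory.
Import numFieldNormedType.Exports.
Local Open Scope classical_set_scope.
Local Open Scope ring_scope.
Set Implicit Arguments.
Unset Strict Implicit.
Unset Printing Implicit Defensive.
Section P1.
Variable R : realType.
Local Notation Bor n := (g_sigma_algebraType (@open 'rV[R]_n)).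

Lemma ball_row_mx m n1 n2 (a c : 'M[R]_(m, n1)) (b d : 'M[R]_(m, n2)) e :
  ball (row_mx a b) e (row_mx c d) <-> ball a e c /\ ball b e d.
Proof.
split.
- move=> [e0 H]; split; split => // i j.
  + by have := H i (lshift n2 j); rewrite !row_mxEl.
  + by have := H i (rshift n1 j); rewrite !row_mxEr.
- move=> [[e0 H1] [_ H2]]; split => // i j.
  by case: (split_ordP j) => k ->; rewrite ?row_mxEl ?row_mxEr.
Qed.

Lemma ball_const1 (a c : 'rV[R]_1) e :
  ball a e c <-> ball (a 0 0) e (c 0 0).
Proof.
split; first by move=> [_ H]; exact: H.
move=> H; split; first by apply: le_lt_trans H.
by move=> i j; rewrite !ord1.
Qed.

Definition rowcons n (p : R * 'rV[R]_n) : 'rV[R]_n.+1 :=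
  row_mx (const_mx p.1 : 'rV[R]_1) p.2.

Lemma open_ratballs n (U : set 'rV[R]_n.+1) : open U ->
  U = \bigcup_(i in setT)
    (match @unpickle ('rV[rat]_n.+1 * rat)%type i with
     | Some qr => if pselect (ball (map_mx (@ratr R) qr.1) (ratr qr.2) `<=` U)
                  then ball (map_mx (@ratr R) qr.1) (ratr qr.2) else set0
     | None => set0 end).
Proof.
move=> oU; apply/seteqP; split; last first.
  move=> x [i _]; case: (unpickle i) => [[q r]|] //=.
  by case: pselect => // H /H.
move=> x Ux.
have /nbhs_ballP [e e0 sU] := oU x Ux.
have e4 : 0 < e / 4 by rewrite divr_gt0.
have [r rI] : exists r : rat, ratr r \in `](e / 4), (e / 2)[.
  by apply: rat_in_itvoo; rewrite ltr_pM2l // ltf_pV2 ?posrE //; lra.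
have : forall j : 'I_n.+1, exists q : rat, ratr q \in `](x 0 j - e / 4), (x 0 j + e / 4)[.
  by move=> j; apply: rat_in_itvoo; lra.
case/choice => f fI.
pose q : 'rV[rat]_n.+1 := \row_j f j.
have Hq j : `|ratr (f j) - x 0 j| < e / 4.
  by have := fI j; rewrite in_itv /= => /andP[h1 h2]; rewrite ltr_norml; apply/andP; split; lra.
move: rI; rewrite in_itv /= => /andP[r1 r2].
have r0 : 0 < (ratr r : R) by lra.
have sub : ball (map_mx (@ratr R) q) (ratr r) `<=` U.
  move=> y [_ Hy]; apply: sU; split => // i j; rewrite !ord1.
  have := Hy 0 j; rewrite /ball /= !mxE => hy.
  have := Hq j; rewrite /ball /=.
  move: hy; set a := ratr (f j); set b := x 0 j; set c := y 0 j => h1 h2.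
  rewrite (_ : b - c = (a - c) - (a - b)); last by ring.
  rewrite (le_lt_trans (ler_normB _ _)) //.
  apply: (lt_le_trans (ltrD h1 h2)); lra.

exists (pickle (q, r)); first by [].
rewrite pickleK /=.
destruct (pselect _) as [s|C]; last by case: (C sub).
split => // i j; rewrite !ord1 /ball /= !mxE.
exact: (lt_trans (Hq j) r1).
Qed.


Lemma preimage_rowcons_ball n (Q : 'rV[R]_n.+1) r :
  @rowcons n @^-1` ball Q r =
  ball (lsubmx (Q : 'rV_(1 + n)) 0 0) r `*` ball (rsubmx (Q : 'rV_(1 + n))) r.
Proof.
apply/seteqP; split => [[t z]|[t z]] /=.
- rewrite /rowcons /= -[X in ball X](hsubmxK (Q : 'rV_(1 + n))).
  move=> H; have [/ball_const1 h1 h2] := proj1 (@ball_row_mx 1 1 n _ _ _ _ _) H.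
  split; last exact: h2. by move: h1; rewrite /ball /= !mxE.
- move=> [h1 h2]; rewrite /rowcons /= -[X in ball X](hsubmxK (Q : 'rV_(1 + n))).
  apply: (proj2 (@ball_row_mx 1 1 n _ _ _ _ _)); split => //.
  apply/ball_const1; by move: h1; rewrite /ball /= !mxE.
Qed.

Lemma rowcons_measurable n :
  measurable_fun [set: (R * Bor n)%type] (@rowcons n : _ -> Bor n.+1).
Proof.
apply: (@measurability _ _ _ (Bor n.+1) _ _ (@open 'rV[R]_n.+1)) => //.
move=> _ [U oU <-]; rewrite setTI (open_ratballs oU) preimage_bigcup.
apply: bigcup_measurable => i _.
case: (unpickle i) => [[q r]|]; last by rewrite preimage_set0.
rewrite /=; destruct (pselect _) as [s|C]; last by rewrite preimage_set0.
rewrite preimage_rowcons_ball; apply: measurableX.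
  apply: measurable_realfun.open_measurable; exact: ball_open.
apply: sub_sigma_algebra; exact: ball_open.
Qed.


Local Open Scope ereal_scope.

Lemma iint_nn_ge0 n (f : 'rV[R]_n -> \bar R) : (forall y, 0 <= f y) -> 0 <= iint_nn f.
Proof.
elim: n f => [|n IH] f f0 /=; first exact: f0.
by apply: integral_ge0 => t _; apply: IH.
Qed.

Lemma iint_nn0 n : iint_nn (fun _ : 'rV[R]_n => 0) = 0.
Proof.
elim: n => [|n IH] //=.
rewrite (eq_integral (fun _ => 0)); first exact: integral0.
by move=> t _; rewrite IH.
Qed.

Lemma TM n : forall d (T : measurableType d) (f : (T * Bor n)%type -> \bar R),
  measurable_fun [set: (T * Bor n)%type] f -> (forall p, 0 <= f p) ->
  measurable_fun setT (fun x : T => iint_nn (fun y : 'rV[R]_n => f (x, y))).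
Proof.
elim: n => [|n IH] d T f mf f0.
  change (measurable_fun setT (f \o (fun x : T => (x, ((0%R : 'rV[R]_0) : Bor 0))))).
  apply: measurableT_comp => //; apply: measurable_fun_pair => //.
pose g := fun p : (T * R * Bor n)%type => f (p.1.1, (rowcons (p.1.2, p.2) : Bor n.+1)).
have mg : measurable_fun setT g.
  apply: measurableT_comp mf _; apply: measurable_fun_pair.
    exact: measurableT_comp measurable_fst measurable_fst.
  apply: measurableT_comp (@rowcons_measurable n) _.
  apply: measurable_fun_pair => //.
  exact: measurableT_comp measurable_snd measurable_fst.
have := IH _ _ g mg (fun p => f0 _).
move=> /(@measurable_fun_fubini_tonelli_F _ _ _ _ _ (@lebesgue_measure R)).
apply => p; apply: iint_nn_ge0 => y; exact: f0.
Qed.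


Lemma sec_meas n (f : Bor n.+1 -> \bar R) (t : R) : measurable_fun setT f ->
  measurable_fun [set: Bor n] (fun y => f (rowcons (t, y))).
Proof.
move=> mf; apply: (measurableT_comp mf).
apply: (measurableT_comp (@rowcons_measurable n)).
exact: measurable_fun_pair.
Qed.

Lemma out_meas n (f : Bor n.+1 -> \bar R) : measurable_fun setT f ->
  (forall y, 0 <= f y) ->
  measurable_fun [set: R] (fun t => iint_nn (fun y : 'rV[R]_n => f (rowcons (t, y)))).
Proof.
move=> mf f0.
apply: (TM (f := fun p : (R * Bor n)%type => f (rowcons p))) => //.
exact: measurableT_comp mf (@rowcons_measurable n).
Qed.

Lemma iint_nnD n (f g : Bor n -> \bar R) : measurable_fun setT f -> measurable_fun setT g ->
  (forall y, 0 <= f y) -> (forall y, 0 <= g y) ->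
  iint_nn (fun y => f y + g y) = iint_nn f + iint_nn g.
Proof.
elim: n f g => [|n IH] f g mf mg f0 g0 //=.
under eq_integral => t _.
  rewrite (IH (fun y => f (rowcons (t, y))) (fun y => g (rowcons (t, y)))) //; try exact: sec_meas.
  over.
apply: ge0_integralD => //.
- by move=> t _; apply: iint_nn_ge0.
- exact: out_meas.
- by move=> t _; apply: iint_nn_ge0.
- exact: out_meas.
Qed.

Lemma iint_nnZ n (f : Bor n -> \bar R) (c : R) : measurable_fun setT f ->
  (forall y, 0 <= f y) -> (0 <= c)%R ->
  iint_nn (fun y => c%:E * f y) = c%:E * iint_nn f.
Proof.
elim: n f => [|n IH] f mf f0 c0 //=.
under eq_integral => t _.
  rewrite (IH (fun y => f (rowcons (t, y)))) //; try exact: sec_meas.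
  over.
apply: ge0_integralZl => //.
  exact: out_meas.
by move=> t _; apply: iint_nn_ge0.
Qed.

Lemma iint_nn_le n (f g : Bor n -> \bar R) : measurable_fun setT f -> measurable_fun setT g ->
  (forall y, 0 <= f y) -> (forall y, f y <= g y) ->
  iint_nn f <= iint_nn g.
Proof.
elim: n f g => [|n IH] f g mf mg f0 fg //=.
have g0 y : 0 <= g y by apply: le_trans (fg y).
apply: ge0_le_integral => //.
- by move=> t _; apply: iint_nn_ge0.
- exact: out_meas.
- exact: out_meas.
move=> t _; apply: IH => //; exact: sec_meas.
Qed.

End P1.
Section P3.
Variable R : realType.

Lemma sin_lip (u v : R) : `|sin u - sin v| <= `|u - v|.
Proof.
wlog uv : u v / v <= u.
  move=> H; case/orP: (le_total v u) => h; first exact: H.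
  by rewrite distrC [X in _ <= X]distrC; apply: H.
have H1 : forall x, x \in `]v, u[ -> is_derive x 1 (@sin R) (cos x).
  by move=> x _; exact: is_derive_sin.
have H2 : {within `[v, u], continuous (@sin R)}.
  exact: continuous_subspaceT (@continuous_sin R).
have [c _ E] := MVT_segment uv H1 H2.
rewrite E.
rewrite normrM; apply: ler_piMl => //; exact: cos_max.
Qed.

Lemma sq_ineq (a b l : R) : 0 < l -> a ^+ 2 <= (1 + l) * b ^+ 2 + (1 + l^-1) * (a - b) ^+ 2.
Proof.
move=> l0.
have H : 0 <= l * ((1 + l) * b ^+ 2 + (1 + l^-1) * (a - b) ^+ 2 - a ^+ 2).
  have -> : l * ((1 + l) * b ^+ 2 + (1 + l^-1) * (a - b) ^+ 2 - a ^+ 2) =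
            (l * b - (a - b)) ^+ 2 + (a - b) ^+ 2 * (l / l - 1).
    by ring.
  by rewrite divff ?gt_eqF // subrr mulr0 addr0 sqr_ge0.
by rewrite -subr_ge0; move: H; rewrite pmulr_rge0.
Qed.

Lemma dotC d (x y : 'rV[R]_d) : dotR x y = dotR y x.
Proof. by apply: eq_bigr => i _; rewrite mulrC. Qed.

Lemma dotDl d (x y z : 'rV[R]_d) : dotR (x + y) z = dotR x z + dotR y z.
Proof. by rewrite /dotR -big_split; apply: eq_bigr => i _; rewrite mxE mulrDl. Qed.

Lemma dotZl d a (x z : 'rV[R]_d) : dotR (a *: x) z = a * dotR x z.
Proof. by rewrite /dotR mulr_sumr; apply: eq_bigr => i _; rewrite mxE mulrA. Qed.

Lemma dotNl d (x z : 'rV[R]_d) : dotR (- x) z = - dotR x z.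
Proof. by rewrite -scaleN1r dotZl mulN1r. Qed.

Lemma dotBl d (x y z : 'rV[R]_d) : dotR (x - y) z = dotR x z - dotR y z.
Proof. by rewrite dotDl dotNl. Qed.

Lemma dotBr d (x y z : 'rV[R]_d) : dotR z (x - y) = dotR z x - dotR z y.
Proof. by rewrite dotC dotBl !(dotC z). Qed.

Lemma dotZr d a (x z : 'rV[R]_d) : dotR z (a *: x) = a * dotR z x.
Proof. by rewrite dotC dotZl dotC. Qed.

Lemma dot0r d (x : 'rV[R]_d) : dotR x 0 = 0.
Proof. by rewrite /dotR big1 // => i _; rewrite mxE mulr0. Qed.

Lemma dot_ge0 d (x : 'rV[R]_d) : 0 <= dotR x x.
Proof. by apply: sumr_ge0 => i _; rewrite -expr2 sqr_ge0. Qed.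

Lemma dot_eq0 d (x : 'rV[R]_d) : dotR x x = 0 -> x = 0.
Proof.
move=> H; apply/rowP => i; rewrite mxE.
have := @psumr_eq0P _ _ xpredT (fun j => x 0 j * x 0 j) _ H i isT.
move=> /(_ (fun j _ => sqr_ge0 (x 0 j))) /eqP; rewrite mulf_eq0 orbb => /eqP //.
Qed.

Lemma dotCS d (x y : 'rV[R]_d) : dotR x y ^+ 2 <= dotR x x * dotR y y.
Proof.
have [c0|c0] := eqVneq (dotR y y) 0.
  by rewrite (dot_eq0 c0) !dot0r mulr0 expr0n.
have cpos : 0 < dotR y y by rewrite lt_def c0 dot_ge0.
set a := dotR x x; set b := dotR x y; set c := dotR y y.
have H := dot_ge0 (c *: x - b *: y).
rewrite !dotBl !dotBr !dotZl !dotZr -/a -/b -/c (dotC y x) -/b in H.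
have : 0 <= c * (a * c - b ^+ 2) by move: H; rewrite expr2; nra.
by rewrite pmulr_rge0 // subr_ge0 mulrC.
Qed.

Lemma enorm_ge0 d (x : 'rV[R]_d) : 0 <= enorm x.
Proof. exact: sqrtr_ge0. Qed.

Lemma enorm_sq d (x : 'rV[R]_d) : enorm x ^+ 2 = dotR x x.
Proof. by rewrite sqr_sqrtr // dot_ge0. Qed.

Lemma enormZ d a (x : 'rV[R]_d) : enorm (a *: x) = `|a| * enorm x.
Proof.
by rewrite /enorm dotZl dotZr mulrA -expr2 sqrtrM ?sqr_ge0 // sqrtr_sqr.
Qed.

Lemma enormN d (x : 'rV[R]_d) : enorm (- x) = enorm x.
Proof. by rewrite -scaleN1r enormZ normrN1 mul1r. Qed.

Lemma enormB d (x y : 'rV[R]_d) : enorm (x - y) = enorm (y - x).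
Proof. by rewrite -enormN opprB. Qed.

Lemma enorm_eq0 d (x : 'rV[R]_d) : enorm x = 0 -> x = 0.
Proof.
move=> H; apply: dot_eq0; by rewrite -enorm_sq H expr0n.
Qed.

Lemma enorm0 d : enorm (0 : 'rV[R]_d) = 0.
Proof. by rewrite /enorm dot0r sqrtr0. Qed.

Lemma dot_le_enorm d (x y : 'rV[R]_d) : `|dotR x y| <= enorm x * enorm y.
Proof.
rewrite -sqrtr_sqr /enorm -sqrtrM ?dot_ge0 //.
apply: ler_wsqrtr; exact: dotCS.
Qed.

Lemma enormD d (x y : 'rV[R]_d) : enorm (x + y) <= enorm x + enorm y.
Proof.
rewrite -(@ler_pXn2r _ 2) ?nnegrE ?addr_ge0 ?enorm_ge0 //.
rewrite enorm_sq dotDl !(dotC _ (x + y)) !dotDl -!enorm_sq (dotC x y).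
have := dot_le_enorm y x; have := ler_norm (dotR y x).
set b := dotR y x; move=> h1 h2; nra.
Qed.

Lemma enormBB d (x y : 'rV[R]_d) : enorm x - enorm y <= enorm (x - y).
Proof.
rewrite lerBlDr; apply: le_trans (enormD _ _); by rewrite subrK.
Qed.


Lemma RL (a b c : R) : 0 <= a -> 0 <= b -> 0 <= c ->
  (forall l, 0 < l -> a <= (1 + l) * b + (1 + l^-1) * c) ->
  Num.sqrt a <= Num.sqrt b + Num.sqrt c.
Proof.
move=> a0 b0 c0 H.
set sb := Num.sqrt b; set sc := Num.sqrt c.
have sb0 : 0 <= sb by exact: sqrtr_ge0.
have sc0 : 0 <= sc by exact: sqrtr_ge0.
have eb : b = sb ^+ 2 by rewrite sqr_sqrtr.
have ec : c = sc ^+ 2 by rewrite sqr_sqrtr.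
suff : a <= (sb + sc) ^+ 2.
  move=> /ler_wsqrtr; rewrite sqrtr_sqr ger0_norm //; exact: addr_ge0.
apply/ler_addgt0Pr => e e0.
set eps := e / (sb + sc + 1).
have s1 : 0 < sb + sc + 1 by lra.
have eps0 : 0 < eps by rewrite divr_gt0.
have epsb : eps * (sb + sc) <= e.
  rewrite /eps mulrAC ler_pdivrMr //; nra.
have p0 : 0 < sc + eps by lra.
have q0 : 0 < sb + eps by lra.
have := H ((sc + eps) / (sb + eps)) (divr_gt0 p0 q0).
rewrite invf_div.
have X : (sc + eps) / (sb + eps) * b <= (sc + eps) * sb.
  rewrite mulrAC ler_pdivrMr // eb.
  have := mulr_ge0 (mulr_ge0 (ltW p0) sb0) (ltW eps0); nra.
have Y : (sb + eps) / (sc + eps) * c <= (sb + eps) * sc.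
  rewrite mulrAC ler_pdivrMr // ec.
  have := mulr_ge0 (mulr_ge0 (ltW q0) sc0) (ltW eps0); nra.
move: X Y; rewrite eb ec => X Y Ha.
nra.
Qed.

Section AL.
Variables (d : nat) (g : 'rV[R]_d -> R) (K : R).
Hypotheses (K0 : 0 <= K) (g0 : forall x, 0 <= g x)
  (glip : forall x y, `|g x - g y| <= K * enorm (x - y))
  (glin : forall x, g x <= K * enorm x).
Let h (x : 'rV[R]_d) := if x == 0 then 0 else (g x / enorm x) *: x.

Let enorm_gt0 (x : 'rV[R]_d) : x != 0 -> 0 < enorm x.
Proof.
move=> x0; rewrite lt_def enorm_ge0 andbT; apply/eqP => /enorm_eq0 E.
by rewrite E eqxx in x0.
Qed.

Let enorm_h x : enorm (h x) = g x.
Proof.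
rewrite /h; case: eqP => [->|/eqP x0].
  have H : g 0 <= 0 by have := glin 0; rewrite enorm0 mulr0.
  by rewrite enorm0; apply/eqP; rewrite eq_le H g0.
rewrite enormZ ger0_norm ?divr_ge0 ?enorm_ge0 // mulfVK //.
by rewrite gt_eqF // enorm_gt0.
Qed.

Let ordered x y : x != 0 -> y != 0 -> enorm y <= enorm x ->
  enorm (h x - h y) <= 3%:R * K * enorm (x - y).
Proof.
move=> x0 y0 yx; rewrite /h (negbTE x0) (negbTE y0).
set a := enorm x; set b := enorm y.
have a0 : 0 < a by exact: enorm_gt0.
have b0 : 0 < b by exact: enorm_gt0.
have E : (g x / a) *: x - (g y / b) *: y =
         ((g x - g y) / a) *: x + (g y / b) *: ((b / a) *: x - y).
  have F : g y / b * (b / a) = g y / a by field; rewrite ?gt_eqF.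
  by rewrite scalerBr scalerA F mulrBl scalerBl addrA subrK.
rewrite E; apply: le_trans (enormD _ _) _.
have ia : 0 <= a^-1 by rewrite invr_ge0 ltW.
rewrite !enormZ -/a normrM (ger0_norm ia) mulfVK ?gt_eqF //.
rewrite (ger0_norm (divr_ge0 (g0 y) (ltW b0))).
have T1 : enorm ((b / a) *: x - y) <= (a - b) + enorm (x - y).
  rewrite (_ : (b / a) *: x - y = ((b / a) - 1) *: x + (x - y)); last first.
    by rewrite scalerBl scale1r addrA subrK.
  apply: le_trans (enormD _ _) _; rewrite enormZ -/a lerD2r.
  rewrite ler0_norm; last by rewrite subr_le0 ler_pdivrMr // mul1r.
  by rewrite opprB mulrBl mul1r mulfVK ?gt_eqF.
have T2 : a - b <= enorm (x - y) by exact: enormBB.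
have T3 : g y / b <= K by rewrite ler_pdivrMr //; exact: glin.
have T4 := glip x y.
have T5 : 0 <= enorm ((b / a) *: x - y) by exact: enorm_ge0.
have T6 : 0 <= g y / b by rewrite divr_ge0 ?g0 ?ltW.
nra.
Qed.

Lemma AL x y : enorm (h x - h y) <= 3%:R * K * enorm (x - y).
Proof.
have h0 : h 0 = 0 by rewrite /h eqxx.
have [->|x0] := eqVneq x 0.
  rewrite h0 sub0r enormN enorm_h sub0r enormN.
  apply: le_trans (glin y) _; rewrite -subr_ge0 -mulrBl.
  apply: mulr_ge0; [have := K0; lra|exact: enorm_ge0].
have [->|y0] := eqVneq y 0.
  rewrite h0 subr0 enorm_h subr0.
  apply: le_trans (glin x) _; rewrite -subr_ge0 -mulrBl.
  apply: mulr_ge0; [have := K0; lra|exact: enorm_ge0].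
case/orP: (le_total (enorm y) (enorm x)) => H; first exact: ordered.
by rewrite (enormB (h x)) (enormB x); apply: ordered.
Qed.
End AL.

End P3.
Section P5.
Variable R : realType.
Local Notation Bor n := (g_sigma_algebraType (@open 'rV[R]_n)).
Variables (d : nat) (k : 'rV[R]_d -> R).
Hypothesis k0 : forall x, 0 <= k x.
Hypothesis bk : borel_fun k.
Hypothesis ik1 : iint_nn (fun x => (k x)%:E) = 1%E.
Hypothesis Mfin : (iint_nn (fun x => `|enorm x ^+ 2 * k x|%:E) < +oo)%E.

Lemma mk : measurable_fun [set: Bor d] k.
Proof. by move=> _ B mB; rewrite setTI; exact: bk. Qed.

Lemma mcoord (i : 'I_d) : measurable_fun [set: Bor d] (fun x : 'rV[R]_d => x 0 i).
Proof.
apply: (measurability _ (RGenOpens.measurableE R)) => //.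
move=> _ [_ [a [b ->]] <-]; apply: sub_sigma_algebra; rewrite setTI.
apply: (proj1 (continuousP _) (@coord_continuous R 1 d 0 i)).
exact: interval_open.
Qed.

Lemma mdot (y : 'rV[R]_d) : measurable_fun [set: Bor d] (fun x : 'rV[R]_d => dotR x y).
Proof.
apply: measurable_sum => i; apply: measurable_funM; first exact: mcoord.
exact: measurable_cst.
Qed.

Lemma mcos (a : R) (y : 'rV[R]_d) :
  measurable_fun [set: Bor d] (fun x : 'rV[R]_d => cos (a * dotR x y)).
Proof.
apply: (measurableT_comp (continuous_measurable_fun (@continuous_cos R))).
apply: measurable_funM; [exact: measurable_cst|exact: mdot].
Qed.

Lemma menorm : measurable_fun [set: Bor d] (fun x : 'rV[R]_d => enorm x).
Proof.
apply: (measurableT_comp (continuous_measurable_fun (@sqrt_continuous R))).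
by apply: measurable_sum => i; apply: measurable_funM; exact: mcoord.
Qed.


Lemma mE (f : 'rV[R]_d -> R) : measurable_fun [set: Bor d] f ->
  measurable_fun [set: Bor d] (fun x => (f x)%:E).
Proof. by move=> mf; apply/measurable_EFinP. Qed.

Lemma posneg (r : R) : Num.max r 0 - Num.max (- r) 0 = r.
Proof.
case/orP: (le_total 0 r) => h.
  by rewrite (max_l h) (max_r _) ?subr0 // oppr_le0.
by rewrite (max_r h) (max_l _) ?sub0r ?opprK // oppr_ge0.
Qed.

Definition Fe (y : 'rV[R]_d) :=
  iint_nn (fun x => (k x * (1 - cos (2 * pi * dotR x y)))%:E).

Lemma Fe_fin y : exists F : R, (Fe y = F%:E) /\ (complex.Re (fourier k 0 - fourier k y) = F) /\ (0 <= F).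
Proof.
pose c x := cos (2 * pi * dotR x y).
have mc : measurable_fun [set: Bor d] c by exact: mcos.
have mkc : measurable_fun [set: Bor d] (fun x => k x * c x).
  by apply: measurable_funM; [exact: mk|exact: mc].
have mP : measurable_fun [set: Bor d] (fun x => Num.max (k x * c x) 0).
  by apply: measurable_maxr; [exact: mkc|exact: measurable_cst].
have mN : measurable_fun [set: Bor d] (fun x => Num.max (- (k x * c x)) 0).
  by apply: measurable_maxr; [exact: measurable_funN|exact: measurable_cst].
have mKP : measurable_fun [set: Bor d] (fun x => k x - Num.max (k x * c x) 0).
  by apply: measurable_funB => //; exact: mk.
have P0 x : 0 <= Num.max (k x * c x) 0 by rewrite le_max lexx orbT.
have N0 x : 0 <= Num.max (- (k x * c x)) 0 by rewrite le_max lexx orbT.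
have Pk x : Num.max (k x * c x) 0 <= k x.
  rewrite ge_max k0 andbT; rewrite -[X in _ <= X]mulr1.
  by apply: ler_wpM2l => //; exact: cos_le1.
have Nk x : Num.max (- (k x * c x)) 0 <= k x.
  rewrite ge_max k0 andbT -mulrN; rewrite -[X in _ <= X]mulr1.
  by apply: ler_wpM2l => //; rewrite lerNl; exact: cos_geN1.
have KP0 x : 0 <= k x - Num.max (k x * c x) 0 by rewrite subr_ge0.
have fin_of (f : 'rV[R]_d -> R) : measurable_fun [set: Bor d] f ->
    (forall x, 0 <= f x) -> (forall x, f x <= k x) ->
    exists r, iint_nn (fun x => (f x)%:E) = r%:E /\ 0 <= r.
  move=> mf f0 fk.
  have H0 : (0 <= iint_nn (fun x => (f x)%:E))%E by apply: iint_nn_ge0 => x; rewrite lee_fin.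
  have H1 : (iint_nn (fun x => (f x)%:E) <= 1)%E.
    rewrite -ik1; apply: iint_nn_le; [exact: mE|exact: mE mk| |].
    - by move=> x; rewrite lee_fin.
    - by move=> x; rewrite lee_fin.
  have Hf : iint_nn (fun x => (f x)%:E) \is a fin_num.
    by rewrite ge0_fin_numE // (le_lt_trans H1) // ltry.
  by exists (fine (iint_nn (fun x => (f x)%:E))); rewrite fineK //; split => //; rewrite -lee_fin fineK.
have [a [Ea a0]] := fin_of _ mP P0 Pk.
have [b [Eb b0]] := fin_of _ mN N0 Nk.
have KPk x : k x - Num.max (k x * c x) 0 <= k x by rewrite lerBlDr lerDl.
have [i [Ei i0]] := fin_of _ mKP KP0 KPk.
have mE' (f : 'rV[R]_d -> R) : measurable_fun [set: Bor d] f -> measurable_fun [set: Bor d] (fun x => (f x)%:E).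
  exact: mE.
have E1 : iint_nn (fun x => (k x)%:E) = a%:E + i%:E.
  rewrite -Ea -Ei -iint_nnD.
  - by congr iint_nn; apply: funext => x /=; rewrite -EFinD addrC subrK.
  - exact: mE'.
  - exact: mE'.
  - by move=> x; rewrite lee_fin.
  - by move=> x; rewrite lee_fin.
have {}E1 : (1:R) = a + i by apply: EFin_inj; rewrite EFinD -E1 ik1.
have E2 : Fe y = (i + b)%:E.
  rewrite EFinD -Ei -Eb -iint_nnD.
  - congr iint_nn; apply: funext => x /=; rewrite -EFinD; congr EFin.
    have := posneg (k x * c x); rewrite /c mulrBr mulr1; lra.
  - exact: mE'.
  - exact: mE'.
  - by move=> x; rewrite lee_fin.
  - by move=> x; rewrite lee_fin.
exists (i + b); split => //; split; last exact: addr_ge0.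
have H0 x : k x * cos (2 * pi * dotR x 0) = k x by rewrite dot0r mulr0 cos0 mulr1.
rewrite /fourier /= /iint.
have -> : (fun x => (Num.max (k x * cos (2 * pi * dotR x 0)) 0)%:E) = fun x => (k x)%:E.
  by apply: funext => x; rewrite H0 max_l.
have -> : (fun x => (Num.max (- (k x * cos (2 * pi * dotR x 0))) 0)%:E) = fun _ => 0%E.
  by apply: funext => x; rewrite H0 max_r // oppr_le0.
rewrite ik1 iint_nn0 sube0.
rewrite /c in Ea Eb; rewrite Ea Eb -EFinB /=; lra.
Qed.


Lemma sqr_le_abs (a b : R) : `|a| <= `|b| -> a ^+ 2 <= b ^+ 2.
Proof.
move=> h; have : `|a| ^+ 2 <= `|b| ^+ 2 by rewrite ler_pXn2r ?nnegrE.
by rewrite !real_normK ?num_real.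
Qed.

Lemma one_cos2 (t : R) : 1 - cos (2 * t) = 2 * sin t ^+ 2.
Proof.
rewrite (_ : 2 * t = t *+ 2); last by rewrite mulr_natl.
rewrite cos_mulr2n cos2sin2; rewrite mulr2n; lra.
Qed.

Lemma PW (x y z : 'rV[R]_d) (l : R) : 0 < l ->
  k x * (1 - cos (2 * pi * dotR x y)) <=
  (1 + l) * (k x * (1 - cos (2 * pi * dotR x z))) +
  ((1 + l^-1) * (2 * pi ^+ 2 * enorm (y - z) ^+ 2)) * `|enorm x ^+ 2 * k x|.
Proof.
move=> l0.
rewrite -[2 * pi * dotR x y]mulrA -[2 * pi * dotR x z]mulrA !one_cos2.
set u := pi * dotR x y; set v := pi * dotR x z.
have H1 := sq_ineq (sin u) (sin v) l0.
have H2 : (sin u - sin v) ^+ 2 <= pi ^+ 2 * (dotR x x * dotR (y - z) (y - z)).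
  apply: le_trans (sqr_le_abs (sin_lip u v)) _.
  rewrite /u /v -mulrBr -dotBr exprMn; apply: ler_wpM2l; first exact: sqr_ge0.
  exact: dotCS.
rewrite ger0_norm; last by rewrite mulr_ge0 ?sqr_ge0.
rewrite !enorm_sq.
have kx := k0 x.
have il : 0 <= 1 + l^-1 by rewrite addr_ge0 // invr_ge0 ltW.
have S1 := ler_wpM2l kx H1.
have S2 := ler_wpM2l (mulr_ge0 kx il) H2.
nra.
Qed.


Definition Ms := iint_nn (fun x => (`|enorm x ^+ 2 * k x|)%:E).
Definition Mr := fine Ms.

Lemma mB : measurable_fun [set: Bor d] (fun x => `|enorm x ^+ 2 * k x|).
Proof.
apply: (measurableT_comp (@normr_measurable R setT)).
apply: measurable_funM; [exact: measurable_funX menorm|exact: mk].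
Qed.

Lemma Ms_fin : Ms = Mr%:E /\ 0 <= Mr.
Proof.
have H0 : (0 <= Ms)%E by apply: iint_nn_ge0 => x; rewrite lee_fin.
have Hf : Ms \is a fin_num by rewrite ge0_fin_numE.
by rewrite /Mr fineK //; split => //; rewrite -lee_fin fineK.
Qed.

Lemma mA (z : 'rV[R]_d) : measurable_fun [set: Bor d] (fun x => k x * (1 - cos (2 * pi * dotR x z))).
Proof.
apply: measurable_funM; first exact: mk.
by apply: measurable_funB; [exact: measurable_cst|exact: mcos].
Qed.

Lemma F_ineq y z l (Fy Fz : R) : Fe y = Fy%:E -> Fe z = Fz%:E -> 0 < l ->
  Fy <= (1 + l) * Fz + ((1 + l^-1) * (2 * pi ^+ 2 * enorm (y - z) ^+ 2)) * Mr.
Proof.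
move=> Ey Ez l0.
set C := (1 + l^-1) * (2 * pi ^+ 2 * enorm (y - z) ^+ 2).
have C0 : 0 <= C.
  apply: mulr_ge0; first by rewrite addr_ge0 // invr_ge0 ltW.
  by apply: mulr_ge0; [apply: mulr_ge0; [|exact: sqr_ge0]|exact: sqr_ge0].
have l1 : 0 <= 1 + l by rewrite addr_ge0 // ltW.
have A0 (w : 'rV[R]_d) x : 0 <= k x * (1 - cos (2 * pi * dotR x w)).
  by rewrite mulr_ge0 ?k0 // subr_ge0 cos_le1.
have H1 : (Fe y <= iint_nn (fun x => ((1 + l) * (k x * (1 - cos (2 * pi * dotR x z))) + C * `|enorm x ^+ 2 * k x|)%:E))%E.
  apply: iint_nn_le.
  - by apply: mE; exact: mA.
  - apply: mE; apply: measurable_funD; apply: measurable_funM; try exact: measurable_cst.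
      exact: mA.
    exact: mB.
  - by move=> x; rewrite lee_fin.
  - by move=> x; rewrite lee_fin; exact: PW.
have H2 : iint_nn (fun x => ((1 + l) * (k x * (1 - cos (2 * pi * dotR x z))) + C * `|enorm x ^+ 2 * k x|)%:E)
   = ((1 + l)%:E * Fe z + C%:E * Ms)%E.
  rewrite -iint_nnZ; last 3 first.
  - by apply: mE; exact: mA.
  - by move=> x; rewrite lee_fin.
  - exact: l1.
  rewrite -iint_nnZ; last 3 first.
  - by apply: mE; exact: mB.
  - by move=> x; rewrite lee_fin.
  - exact: C0.
  rewrite -iint_nnD.
  - by congr iint_nn; apply: funext => x /=; rewrite EFinD !EFinM.
  - by apply: measurable_funeM; by apply: mE; exact: mA.
  - by apply: measurable_funeM; by apply: mE; exact: mB.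
  - by move=> x; apply: mule_ge0; rewrite lee_fin.
  - by move=> x; apply: mule_ge0; rewrite lee_fin.
move: H1; rewrite H2 Ey Ez (proj1 Ms_fin) -!EFinM -EFinD lee_fin.
by rewrite /Mr.
Qed.


Definition FF (y : 'rV[R]_d) := complex.Re (fourier k 0 - fourier k y).
Definition gg (y : 'rV[R]_d) := Num.sqrt (FF y).
Definition KK := Num.sqrt (2 * pi ^+ 2 * Mr).

Lemma FFE y : Fe y = (FF y)%:E /\ 0 <= FF y.
Proof. by have [F [E1 [E2 E3]]] := Fe_fin y; rewrite /FF E2. Qed.

Lemma gg_one y z : gg y <= gg z + KK * enorm (y - z).
Proof.
have [Ey Fy0] := FFE y; have [Ez Fz0] := FFE z.
have Mr0 := proj2 Ms_fin.
have c0 : 0 <= 2 * pi ^+ 2 * Mr * enorm (y - z) ^+ 2.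
  by rewrite mulr_ge0 ?sqr_ge0 // mulr_ge0 // mulr_ge0 // sqr_ge0.
have := @RL R (FF y) (FF z) (2 * pi ^+ 2 * Mr * enorm (y - z) ^+ 2) Fy0 Fz0 c0.
rewrite sqrtrM; last by rewrite mulr_ge0 // mulr_ge0 // sqr_ge0.
rewrite sqrtr_sqr ger0_norm ?enorm_ge0 //; apply => l l0.
apply: le_trans (F_ineq Ey Ez l0) _.
rewrite lerD2l.
have -> : forall a b c e : R, a * (b * c) * e = a * (b * e * c) by move=> *; ring.
by [].
Qed.

Lemma KK0 : 0 <= KK. Proof. exact: sqrtr_ge0. Qed.

Lemma gg0 y : 0 <= gg y. Proof. exact: sqrtr_ge0. Qed.

Lemma gg_lip y z : `|gg y - gg z| <= KK * enorm (y - z).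
Proof.
rewrite ler_norml; apply/andP; split.
  by rewrite lerNl opprB lerBlDl enormB; exact: gg_one.
by rewrite lerBlDl; exact: gg_one.
Qed.

Lemma FF0 : FF 0 = 0.
Proof.
have [E _] := FFE 0; apply: EFin_inj; rewrite -E /Fe.
rewrite (_ : (fun x => _) = fun _ => 0%E); first exact: iint_nn0.
by apply: funext => x; rewrite dot0r mulr0 cos0 subrr mulr0.
Qed.

Lemma gg_lin y : gg y <= KK * enorm y.
Proof. by have := gg_one y 0; rewrite /gg FF0 sqrtr0 add0r subr0. Qed.

Lemma hmapE y : hmap k y = if y == 0 then 0 else (gg y / enorm y) *: y.
Proof.
rewrite /hmap; case: eqP => // _; congr (_ *: _).
rewrite /gg -/(FF y) sqrtrM; last exact: (proj2 (FFE y)).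
by rewrite sqrtrV ?sqr_ge0 // sqrtr_sqr ger0_norm ?enorm_ge0.
Qed.

Lemma main : exists L : R, forall xi eta : 'rV[R]_d,
    enorm (hmap k xi - hmap k eta) <= L * enorm (xi - eta).
Proof.
exists (3%:R * KK) => xi eta.
rewrite !hmapE.
exact: (AL KK0 gg0 gg_lip gg_lin).
Qed.

End P5.

Theorem lemma3p1 (R : realType) (d : nat) (k : 'rV[R]_d -> R) :
  (forall x, 0 <= k x) ->
  radial k ->
  L1 k ->
  iint_nn (fun x => (k x)%:E) = 1%E ->
  L1 (fun x => enorm x ^+ 2 * k x) ->
  weak_grad_L1 k ->
  exists L : R, forall xi eta : 'rV[R]_d,
    enorm (hmap k xi - hmap k eta) <= L * enorm (xi - eta).
Proof.
move=> k0 _ [bk _] ik1 [_ Mfin] _.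
exact: (main k0 bk ik1 Mfin).
Qed.
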